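(* Let $\mu$ be a joint distribution of a triple $(X,A,Y)$ with $X\in\mathcal{X}\subseteq\mathbb{R}^d$, $A\in\{0,1\}$ with $\Pr(A=0),\Pr(A=1)>0$, and $Y\in[-1,1]$. Let $g:\mathcal{X}\to\mathcal{Z}\subseteq\mathbb{R}^k$ be measurable and $Z=g(X)$, and suppose $W_1(g_\sharp\mu_0,g_\sharp\mu_1)\le\epsilon$. Let $h:\mathcal{Z}\to\mathbb{R}$ be $\rho$-Lipschitz, and suppose the densities (w.r.t. Lebesgue measure) of $(h\circ g)_\sharp\mu_0,(h\circ g)_\sharp\mu_1$ are bounded above by a constant $C$. Then $\widehat{Y}=(h\circ g)(X)$ satisfies $2\sqrt{C\rho\epsilon}$-statistical parity, i.e. $$\sup_{z\in\mathbb{R}}\left|\Pr_{\mu_0}(h(g(X))\le z)-\Pr_{\mu_1}(h(g(X))\le z)\right|\le2\sqrt{C\rho\epsilon}.$$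
   Context: For $a\in\{0,1\}$, $\mu_a$ is the conditional distribution of $X$ (and $Y$) given $A=a$; $g_\sharp\mu_a$ is the distribution of $g(X)$ under $\mu_a$. $W_1$ is the 1-Wasserstein distance with respect to the Euclidean norm. *)

(* Defs.v *)
From HB Require Import structures.
From mathcomp Require Import all_boot all_order all_algebra.
From mathcomp Require Import all_classical all_reals all_analysis.
Set Implicit Arguments. Unset Strict Implicit. Unset Printing Implicit Defensive.
Import Order.TTheory GRing.Theory Num.Theory.
Import numFieldNormedType.Exports.
Local Open Scope classical_set_scope.
Local Open Scope ring_scope.

(* Euclidean space R^n as row vectors, equipped with its Borel sigma-algebra
   (the sigma-algebra generated by the open sets of the product topology,
   which is the Euclidean topology). *)
Definition Rvec (R : realType) (n : nat) :=
  g_sigma_algebraType (@open 'rV[R]_n).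

Definition enorm (R : realType) (n : nat) (x : 'rV[R]_n) : R :=
  Num.sqrt (\sum_(i < n) x ord0 i ^+ 2).

Definition lipschitz_with (R : realType) (k : nat) (rho : R)
  (h : 'rV[R]_k -> R) : Prop :=
  0 <= rho /\ forall x y, `|h x - h y| <= rho * enorm (x - y).

(* Pr(E | A = a) on the underlying probability space: this is the measure
   mu_a (conditional distribution given A = a) evaluated on an event. *)
Definition condP (d : measure_display) (Omega : measurableType d)
  (R : realType) (P : probability Omega R) (A : Omega -> bool) (a : bool)
  (E : set Omega) : R :=
  fine (P (E `&` A @^-1` [set a])) / fine (P (A @^-1` [set a])).

Definition is_coupling (d : measure_display) (Omega : measurableType d)
  (R : realType) (P : probability Omega R) (A : Omega -> bool) (k : nat)
  (Z : Omega -> Rvec R k) (pi : probability (Rvec R k * Rvec R k)%type R) : Prop :=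
  forall B : set (Rvec R k), measurable B ->
    fine (pi (B `*` setT)) = condP P A false (Z @^-1` B) /\
    fine (pi (setT `*` B)) = condP P A true (Z @^-1` B).

Definition W1_cond (d : measure_display) (Omega : measurableType d)
  (R : realType) (P : probability Omega R) (A : Omega -> bool) (k : nat)
  (Z : Omega -> Rvec R k) : \bar R :=
  ereal_inf [set (\int[pi]_p (enorm (p.1 - p.2))%:E)%E
            | pi in [set pi : probability (Rvec R k * Rvec R k)%type R
                     | is_coupling P A Z pi]].

Definition cond_density_bounded (d : measure_display) (Omega : measurableType d)
  (R : realType) (P : probability Omega R) (A : Omega -> bool) (a : bool)
  (W : Omega -> R) (C : R) : Prop :=
  exists f : R -> R, measurable_fun setT f /\ (forall x, 0 <= f x <= C) /\
    forall B : set R, measurable B ->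
      ((condP P A a (W @^-1` B))%:E =
        \int[@lebesgue_measure R]_(x in B) (f x)%:E)%E.

(* Main.v *)
Require Import Defs.
From HB Require Import structures.
From mathcomp Require Import all_boot all_order all_algebra.
From mathcomp Require Import all_classical all_reals all_analysis.
From mathcomp Require Import zify ring lra.
Import Order.TTheory GRing.Theory Num.Theory.
Import numFieldNormedType.Exports.
Local Open Scope classical_set_scope.
Local Open Scope ring_scope.
Lemma enorm_ge0 (R : realType) n (x : 'rV[R]_n) : 0 <= enorm x.
Proof. exact: sqrtr_ge0. Qed.

Lemma enorm_small (R : realType) n (x : 'rV[R]_n) (e : R) : 0 <= e ->
  (forall i, `|x ord0 i| < e) -> enorm x <= n.+1%:R * e.
Proof.
move=> e0 H; rewrite /enorm.
rewrite -(@ger0_norm _ (n.+1%:R * e)); last by rewrite mulr_ge0.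
rewrite -sqrtr_sqr ler_wsqrtr //.
apply: (@le_trans _ _ (\sum_(i < n) e ^+ 2)).
  apply: ler_sum => i _; rewrite -real_normK ?num_real //.
  by rewrite lerXn2r ?nnegrE ?normr_ge0 // ltW.
rewrite sumr_const card_ord -mulr_natr exprMn.
have hn : (n%:R : R) <= n.+1%:R ^+ 2 by rewrite -natrX ler_nat; lia.
have := exprn_ge0 2 e0.
move: (e ^+ 2) => E E0; nra.
Qed.

Lemma open_gt (R : realType) k (rho : R) (h : 'rV[R]_k -> R) z :
  lipschitz_with rho h -> open [set x : 'rV[R]_k | z < h x].
Proof.
move=> [rho0 Hl]; rewrite openE => x /= zx.
apply/nbhs_ballP.
pose e := (h x - z) / (2 * (rho + 1) * k.+1%:R).
have e0 : 0 < e by rewrite divr_gt0 // ?subr_gt0 // !mulr_gt0 // ltr_pwDr.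
exists e => // y Hy.
move: Hy; rewrite /ball /= => -[_ Hy].
have : enorm (x - y) <= k.+1%:R * e.
  apply: enorm_small; first exact: (ltW e0).
  by move=> i; rewrite !mxE; have := Hy ord0 i; rewrite /ball /=.
move=> He.
have := Hl x y.
rewrite /= => Hxy.
have : rho * enorm (x - y) < h x - z.
  apply: (le_lt_trans (ler_wpM2l rho0 He)).
  have d0 : 0 < h x - z by rewrite subr_gt0.
  have k0 : (0 : R) < k.+1%:R by [].
  have -> : rho * (k.+1%:R * e) = (rho / (2 * (rho + 1))) * (h x - z).
    rewrite /e; field; apply/andP; split; rewrite gt_eqF //; first lra.

  rewrite gtr_pMl // ltr_pdivrMr ?mulr_gt0 ?ltr_pwDr //; lra.
move: Hxy; rewrite ler_norml => /andP[_ H1] H2.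
lra.
Qed.

Import HBNNSimple.
Lemma markov_simple d (T : measurableType d) (R : realType)
  (mu : {measure set T -> \bar R}) (f : T -> R) (S : set T) (mS : measurable S)
  (c : R) (c0 : 0 <= c) :
  (forall x, 0 <= f x) -> (forall x, S x -> c <= f x) ->
  (c%:E * mu S <= \int[mu]_x (f x)%:E)%E.
Proof.
move=> f0 fS; rewrite ge0_integralE; last by move=> x _; rewrite lee_fin.
rewrite patch_setT.
apply: ereal_sup_ubound => /=.
exists (scale_nnsfun (indic_nnsfun R mS) c0).
  move=> x /=; rewrite lee_fin; change (c * \1_S x <= f x); rewrite indicE.
  by case: (boolP (x \in S)) => [/set_mem /fS|_]; rewrite ?mulr1 ?mulr0.
by rewrite -[X in X = _]/(sintegral mu (cst c \* indic_nnsfun R mS)%R) sintegralrM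
  -[sintegral mu (indic_nnsfun R mS)]/(sintegral mu \1_S) sintegral_indic.
Qed.

Lemma final_real (R : realType) (D C rho eps : R) : 0 <= C -> 0 <= rho ->
  (forall t dl, 0 < t -> 0 < dl -> D <= C * t + rho * (eps + dl) / t) ->
  D <= 2 * Num.sqrt (C * rho * eps).
Proof.
move=> C0 rho0 H.
have [m0|m0] := ltP 0 (C * rho * eps).
  have Cp : 0 < C.
    rewrite lt_neqAle C0 andbT; apply/eqP => C0'; move: m0; rewrite -C0'; lra.
  have rp : 0 < rho.
    rewrite lt_neqAle rho0 andbT; apply/eqP => r0'; move: m0; rewrite -r0' mulr0 mul0r; lra.
  have ep : 0 < rho * eps by move: m0; rewrite -mulrA pmulr_rgt0.
  set s := Num.sqrt C; set q := Num.sqrt (rho * eps).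
  have s0 : 0 < s by rewrite sqrtr_gt0.
  have q0 : 0 < q by rewrite sqrtr_gt0.
  have hs : s ^+ 2 = C by rewrite sqr_sqrtr // ltW.
  have hq : q ^+ 2 = rho * eps by rewrite sqr_sqrtr // ltW.
  have -> : Num.sqrt (C * rho * eps) = s * q by rewrite -mulrA sqrtrM.
  apply/ler_addgt0Pr => e e0.
  have t0 : 0 < q / s by rewrite divr_gt0.
  have dl0 : 0 < e * (q / s) / rho by rewrite divr_gt0 // mulr_gt0.
  apply: (le_trans (H _ _ t0 dl0)).
  rewrite -hs.
  have -> : s ^+ 2 * (q / s) + rho * (eps + e * (q / s) / rho) / (q / s)
      = 2 * (s * q) + e.
    by rewrite mulrDr -hq; field; rewrite !gt_eqF.
  by [].
have sq0 : Num.sqrt (C * rho * eps) = 0 by rewrite ler0_sqrtr.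
rewrite sq0 mulr0.
apply/ler_addgt0Pr => e e0; rewrite add0r.
have [C0'|Cp] := eqVneq C 0.
  set K := `|rho * (eps + 1)| + 1.
  have K0 : 0 < K by rewrite ltr_pwDr // normr_ge0.
  have t0 : 0 < K / e by rewrite divr_gt0.
  apply: (le_trans (H _ _ t0 ltr01)).
  rewrite C0' mul0r add0r invf_div mulrA ler_pdivrMr //.
  rewrite mulrC ler_wpM2l ?(ltW e0) //.
  by rewrite /K (le_trans (ler_norm _)) // lerDl.
have Cp' : 0 < C by rewrite lt_neqAle eq_sym Cp C0.
have re : rho * eps <= 0.
  by move: m0; rewrite -mulrA pmulr_rle0.
have t0 : 0 < e / (2 * C) by rewrite divr_gt0 // mulr_gt0.
have dl0 : 0 < e * (e / (2 * C)) / (2 * (rho + 1)).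
  by rewrite !divr_gt0 ?mulr_gt0 ?invr_gt0 ?mulr_gt0 //; lra.
apply: (le_trans (H _ _ t0 dl0)).
have -> : C * (e / (2 * C)) = e / 2 by field; rewrite gt_eqF.
rewrite mulrDr mulrDl.
have -> : rho * (e * (e / (2 * C)) / (2 * (rho + 1))) / (e / (2 * C))
    = e / 2 * (rho / (rho + 1)).
  field; rewrite !gt_eqF //; lra.
have h1 : rho * eps / (e / (2 * C)) <= 0.
  by rewrite pmulr_lle0 // invr_gt0.
have h2 : rho / (rho + 1) <= 1.
  rewrite ler_pdivrMr; lra.
have h3 : e / 2 * (rho / (rho + 1)) <= e / 2.
  by rewrite ger_pMr ?divr_gt0.
lra.
Qed.


Lemma prob_fine d (T : measurableType d) (R : realType) (P : probability T R)
  (S : set T) : measurable S -> P S = (fine (P S))%:E.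
Proof. by move=> mS; rewrite fineK // fin_num_measure. Qed.

Lemma fine_prob_ge0 d (T : measurableType d) (R : realType) (P : probability T R)
  (S : set T) : 0 <= fine (P S).
Proof. exact: fine_ge0. Qed.

Lemma cover3 d (T : measurableType d) (R : realType) (P : probability T R)
  (X Y1 Y2 Y3 : set T) : measurable X -> measurable Y1 -> measurable Y2 ->
  measurable Y3 -> X `<=` Y1 `|` Y2 `|` Y3 ->
  fine (P X) <= fine (P Y1) + fine (P Y2) + fine (P Y3).
Proof.
move=> mX m1 m2 m3 sub.
have h1 : (P X <= P (Y1 `|` Y2 `|` Y3))%E.
  by apply: le_measure => //; rewrite inE //; repeat apply: measurableU.
have h2 : (P (Y1 `|` Y2 `|` Y3) <= P (Y1 `|` Y2) + P Y3)%E.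
  by apply: measureU2 => //; exact: measurableU.
have h3 : (P (Y1 `|` Y2) <= P Y1 + P Y2)%E by exact: measureU2.
have := le_trans h1 (le_trans h2 (leeD h3 (lexx _))).
by rewrite (prob_fine _ _ _ P _ mX) (prob_fine _ _ _ P _ m1) (prob_fine _ _ _ P _ m2) (prob_fine _ _ _ P _ m3) -!EFinD lee_fin.
Qed.

Lemma markov_rect d (T : measurableType d) (R : realType) (P : probability T R)
  (f : T -> R) (S : set T) (mS : measurable S) (t rho : R) :
  0 < t -> 0 <= rho -> (forall x, 0 <= f x) ->
  (forall x, S x -> t < rho * f x) ->
  (\int[P]_x (f x)%:E)%E \is a fin_num ->
  t * fine (P S) <= rho * fine (\int[P]_x (f x)%:E)%E.
Proof.
move=> t0 r0 f0 HS fin.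
have [rz|rp] := eqVneq rho 0.
  have -> : S = set0.
    apply/seteqP; split => // x /HS; rewrite rz mul0r => /lt_trans /(_ t0).
    by rewrite ltxx.
  by rewrite measure0 /= mulr0 rz mul0r.
have rp' : 0 < rho by rewrite lt_neqAle eq_sym rp r0.
have c0 : 0 <= t / rho by rewrite divr_ge0 // ltW.
have := @markov_simple _ _ _ P f S mS (t / rho) c0 f0.
have Hc : forall x, S x -> t / rho <= f x.
  by move=> x /HS Hx; rewrite ler_pdivrMr // mulrC ltW.
move=> /(_ Hc) H.
have : (((t / rho) * fine (P S))%:E <= (fine (\int[P]_x (f x)%:E))%:E)%E.
  by rewrite EFinM -(prob_fine _ _ _ P _ mS) fineK.
rewrite lee_fin => H2.
have -> : t * fine (P S) = rho * (t / rho * fine (P S)).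
  by field; rewrite gt_eqF.
by rewrite ler_wpM2l // ltW.
Qed.

Lemma dens_bound d (Omega : measurableType d) (R : realType)
  (P : probability Omega R) (A : Omega -> bool) (a : bool) (W : Omega -> R)
  (C z t : R) : 0 < t -> cond_density_bounded P A a W C ->
  condP P A a [set w | z < W w <= z + t] <= C * t.
Proof.
move=> t0 [f [mf [fb Hf]]].
have mI : measurable ([set` `]z, z + t]] : set R) by exact: measurable_itv.
have := Hf _ mI.
have -> : W @^-1` [set` `]z, z + t]] = [set w | z < W w <= z + t].
  by apply/seteqP; split => w /=; rewrite in_itv.
move=> He.
have Hle : (\int[lebesgue_measure]_(x in [set` `]z, (z + t)%R]]) (f x)%:E
    <= (C * t)%:E)%E.
  apply: le_trans.
    apply: (@ge0_le_integral _ _ _ lebesgue_measure _ mI _ (fun=> C%:E)).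
    - by move=> x _; rewrite lee_fin; case/andP: (fb x).
    - by apply/measurable_realfun.measurable_EFinP; exact: (measurable_funS measurableT _ mf).
    - exact: measurable_cst.
    - by move=> x _; rewrite lee_fin; case/andP: (fb x).
  rewrite integral_cst // [X in (_ * X <= _)%E]lebesgue_measure_itv /= lte_fin ltrDl t0.
  by rewrite -EFinD -EFinM addrAC subrr add0r.
by rewrite -lee_fin He.
Qed.

Lemma mRvec_gt (R : realType) k (rho : R) (h : 'rV[R]_k -> R) z :
  lipschitz_with rho h -> measurable ([set x : Rvec R k | z < h x]).
Proof. by move=> Hl; apply: sub_sigma_algebra; exact: open_gt Hl. Qed.

Lemma mRvec_le (R : realType) k (rho : R) (h : 'rV[R]_k -> R) z :
  lipschitz_with rho h -> measurable ([set x : Rvec R k | h x <= z]).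
Proof.
move=> Hl.
rewrite (_ : [set x : Rvec R k | h x <= z] = ~` [set x | z < h x]).
  apply: measurableC. exact: (@mRvec_gt R k rho h z Hl).
apply/seteqP; split => x /=; first by rewrite leNgt => /negP.
by move/negP; rewrite -leNgt.
Qed.

Lemma mRvec_mid (R : realType) k (rho : R) (h : 'rV[R]_k -> R) z z' :
  lipschitz_with rho h -> measurable ([set x : Rvec R k | z < h x <= z']).
Proof.
move=> Hl.
rewrite (_ : [set x : Rvec R k | z < h x <= z'] =
   [set x | z < h x] `&` [set x | h x <= z']).
  by apply: measurableI; [exact: (@mRvec_gt R k rho h z Hl)|exact: (@mRvec_le R k rho h z' Hl)].
by apply/seteqP; split => x /=; [move/andP|move=> [-> ->]].
Qed.

Theorem proposition4 (R : realType) (dO : measure_display)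
  (Omega : measurableType dO) (P : probability Omega R)
  (dx k : nat) (X : Omega -> Rvec R dx) (A : Omega -> bool) (Y : Omega -> R)
  (g : Rvec R dx -> Rvec R k) (h : 'rV[R]_k -> R) (eps rho C : R) :
  measurable_fun setT X -> measurable_fun setT A -> measurable_fun setT Y ->
  (forall w, -1 <= Y w <= 1) ->
  (0 < P (A @^-1` [set false]))%E -> (0 < P (A @^-1` [set true]))%E ->
  measurable_fun setT g ->
  (W1_cond P A (g \o X) <= eps%:E)%E ->
  lipschitz_with rho h ->
  cond_density_bounded P A false (h \o g \o X) C ->
  cond_density_bounded P A true (h \o g \o X) C ->
  forall z : R,
    `| condP P A false [set w | h (g (X w)) <= z]
       - condP P A true [set w | h (g (X w)) <= z] |
    <= 2 * Num.sqrt (C * rho * eps).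
Proof.
move=> mX mA mY Ybd PA0 PA1 mg HW Hlip Hd0 Hd1 z.
have rho0 : 0 <= rho by case: Hlip.
have C0 : 0 <= C.
  by case: Hd0 => f [_ [fb _]]; case/andP: (fb 0) => /le_trans; apply.
apply: (@final_real R _ C rho eps C0 rho0) => t dl t0 dl0.
have : (W1_cond P A (g \o X) < (eps + dl)%:E)%E.
  by apply: (le_lt_trans HW); rewrite lte_fin ltrDl.
move=> /ereal_inf_lt [_ [pi Hpi <-] Hlt].
set u := (\int[pi]_p (enorm (p.1 - p.2))%:E)%E in Hlt.
have u0 : (0 <= u)%E by apply: integral_ge0 => p _; rewrite lee_fin enorm_ge0.
have ufin : u \is a fin_num by rewrite ge0_fin_numE // (lt_trans Hlt) // ltry.
have uf : fine u <= eps + dl by rewrite -lee_fin fineK // ltW.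
set Bz := [set x : Rvec R k | h x <= z].
set G := [set x : Rvec R k | z + t < h x].
set I := [set x : Rvec R k | z < h x <= z + t].
have mBz : measurable Bz by exact: (@mRvec_le R k rho h z Hlip).
have mG : measurable G by exact: (@mRvec_gt R k rho h (z + t) Hlip).
have mI : measurable I by exact: (@mRvec_mid R k rho h z (z + t) Hlip).
have Ha := (Hpi Bz mBz).1.
have Hb := (Hpi Bz mBz).2.
have HI0 : fine (pi (I `*` setT)) <= C * t.
  rewrite (Hpi I mI).1 (_ : (g \o X) @^-1` I = [set w | z < (h \o g \o X) w <= z + t]) //.
  exact: (@dens_bound _ _ _ _ _ _ _ _ z _ t0 Hd0).
have HI1 : fine (pi (setT `*` I)) <= C * t.
  rewrite (Hpi I mI).2 (_ : (g \o X) @^-1` I = [set w | z < (h \o g \o X) w <= z + t]) //.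
  exact: (@dens_bound _ _ _ _ _ _ _ _ z _ t0 Hd1).
have HG1 : t * fine (pi (Bz `*` G)) <= rho * fine u.
  apply: (@markov_rect _ _ _ pi (fun p => enorm (p.1 - p.2)) _ (measurableX mBz mG) t rho t0 rho0) => //.
    by move=> p; exact: enorm_ge0.
  move=> [x1 x2] /= [H1 H2]; rewrite /Bz /G /= in H1 H2.
  case: Hlip => _ /(_ x1 x2); rewrite ler_norml => /andP[L _].
  lra.
have HG2 : t * fine (pi (G `*` Bz)) <= rho * fine u.
  apply: (@markov_rect _ _ _ pi (fun p => enorm (p.1 - p.2)) _ (measurableX mG mBz) t rho t0 rho0) => //.
    by move=> p; exact: enorm_ge0.
  move=> [x1 x2] /= [H1 H2]; rewrite /Bz /G /= in H1 H2.
  case: Hlip => _ /(_ x1 x2); rewrite ler_norml => /andP[_ L].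
  lra.
have cov1 : fine (pi (Bz `*` setT)) <=
    fine (pi (setT `*` Bz)) + fine (pi (setT `*` I)) + fine (pi (Bz `*` G)).
  apply: cover3; try exact: measurableX.
  move=> [x1 x2] /= [H1 _].
  have [h2|h2] := leP (h x2) z; first by left; left.
  have [h3|h3] := leP (h x2) (z + t); last by right.
  by left; right; split => //; rewrite /I /= h2 h3.
have cov2 : fine (pi (setT `*` Bz)) <=
    fine (pi (Bz `*` setT)) + fine (pi (I `*` setT)) + fine (pi (G `*` Bz)).
  apply: cover3; try exact: measurableX.
  move=> [x1 x2] /= [_ H2].
  have [h2|h2] := leP (h x1) z; first by left; left.
  have [h3|h3] := leP (h x1) (z + t); last by right.
  by left; right; split => //; rewrite /I /= h2 h3.
have K : rho * fine u / t <= rho * (eps + dl) / t.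
  by rewrite ler_pM2r ?invr_gt0 // ler_wpM2l.
have M1 : fine (pi (Bz `*` G)) <= rho * fine u / t.
  by rewrite ler_pdivlMr // mulrC.
have M2 : fine (pi (G `*` Bz)) <= rho * fine u / t.
  by rewrite ler_pdivlMr // mulrC.
rewrite -Ha -Hb ler_norml; apply/andP; split; lra.
Qed.
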